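(* Let $\varphi=\nu\tilde n.\sigma$ be a frame well-formed with respect to $\mathtt{s}\in\tilde n$ such that $\varphi\nvdash\mathtt{s}$. Let $U$, $V$ and $M$ be terms public with respect to $\varphi$, with all variables of $U$ and of $V$ in $\mathrm{dom}(\sigma)$ and $M$ ground. Then $U\sigma[\mathtt{s}/M]=V\sigma[\mathtt{s}/M]$ (syntactic equality) implies $U\sigma=V\sigma$.
   Context: Terms over $\Sigma=\{\mathsf{enc}/3,\mathsf{dec}/2,\mathsf{enca}/3,\mathsf{deca}/2,\mathsf{pub}/1,\mathsf{priv}/1,\langle\cdot,\cdot\rangle/2,\pi_1/1,\pi_2/1,\mathsf{sign}/2,\mathsf{check}/3,\mathsf{retrieve}/1\}$, constants (including $\mathsf{ok}$), names and variables; destructors are $\pi_1,\pi_2,\mathsf{dec},\mathsf{deca},\mathsf{check},\mathsf{retrieve}$. Equational theory $E$: $\pi_i(\langle z_1,z_2\rangle)=z_i$, $\mathsf{dec}(\mathsf{enc}(z_1,z_2,z_3),z_2)=z_1$, $\mathsf{deca}(\mathsf{enca}(z_1,\mathsf{pub}(z_2),z_3),\mathsf{priv}(z_2))=z_1$, $\mathsf{check}(z_1,\mathsf{sign}(z_1,\mathsf{priv}(z_2)),\mathsf{pub}(z_2))=\mathsf{ok}$, $\mathsf{retrieve}(\mathsf{sign}(z_1,z_2))=z_1$. Positions of terms are sequences of positive integers, $T|_p$ the subterm at $p$. A frame $\varphi=\nu\tilde n.\sigma$: finite set of restricted names $\tilde n$ and acyclic substitution $\sigma$. Public term w.r.t.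 $\varphi$: no name of $\tilde n$ and no $\mathsf{priv}$. $\varphi\vdash M$: least relation containing $x\sigma$ for $x\in\mathrm{dom}(\sigma)$ and names outside $\tilde n$, closed under application of symbols other than $\mathsf{priv}$ and under $=_E$. $T[\mathtt{s}/M]$ replaces each occurrence of the name $\mathtt{s}$ by $M$. An encryption occurrence $q$ in $U$ (head of $U|_q$ in $\{\mathsf{enc},\mathsf{enca}\}$) is an agent encryption w.r.t. names $\tilde m$ if $U|_{q\cdot3}\in\tilde m$, and a probabilistic encryption w.r.t. a set of terms $S$ if for all $V\in S$ and $p$ with $V|_p=U|_{q\cdot3}$ we have $p=q'\cdot3$ with $V|_{q'}=U|_q$. $\varphi$ is well-formed w.r.t. $\mathtt{s}$ if (1) every encryption in $\sigma$ is an agent encryption w.r.t. $\tilde n\setminus\{\mathtt{s}\}$ and a probabilistic encryption w.r.t. $\mathrm{ran}(\sigma)$; (2) for all subterms $\mathsf{enc}(M,K,R)$, $\mathsf{enca}(M',K',R')$, $\mathsf{sign}(U,V)$, $\mathsf{pub}(W)$, $\mathsf{priv}(W')$ of $\varphi$, $\mathtt{s}$ does not occur in $K,K',V,W,W',R,R'$; (3) $\varphi$ contains no destructor. *)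

(* Defs.v *)
From Stdlib Require Import List Arith.
Import ListNotations.

Inductive term : Type :=
| Var   : nat -> term
| Nam   : nat -> term
| Cst   : nat -> term
| Enc   : term -> term -> term -> term
| Dec   : term -> term -> term
| Enca  : term -> term -> term -> term
| Deca  : term -> term -> term
| Pub   : term -> term
| Priv  : term -> term
| Pair  : term -> term -> term
| Pi1   : term -> term
| Pi2   : term -> term
| Sign  : term -> term -> term
| Check : term -> term -> term -> term
| Retr  : term -> term.

Definition ok : term := Cst 0.

Definition args (t : term) : list term :=
  match t with
  | Var _ | Nam _ | Cst _ => []
  | Enc a b c | Enca a b c | Check a b c => [a; b; c]
  | Dec a b | Deca a b | Pair a b | Sign a b => [a; b]
  | Pub a | Priv a | Pi1 a | Pi2 a | Retr a => [a]
  end.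

(* Positions: sequences of positive integers; T|_p *)
Fixpoint subterm_at (t : term) (p : list nat) : option term :=
  match p with
  | [] => Some t
  | i :: p' =>
      match i with
      | 0 => None
      | S j => match nth_error (args t) j with
               | Some u => subterm_at u p'
               | None => None
               end
      end
  end.

Definition subterm (u t : term) : Prop := exists p, subterm_at t p = Some u.

Definition is_destructor (t : term) : Prop :=
  match t with
  | Pi1 _ | Pi2 _ | Dec _ _ | Deca _ _ | Check _ _ _ | Retr _ => True
  | _ => False
  end.

Definition is_priv (t : term) : Prop :=
  match t with Priv _ => True | _ => False end.

Definition is_encryption (t : term) : Prop :=
  match t with Enc _ _ _ | Enca _ _ _ => True | _ => False end.

Definition occurs_name (n : nat) (t : term) : Prop := subterm (Nam n) t.
Definition occurs_var (x : nat) (t : term) : Prop := subterm (Var x) t.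

Definition ground (t : term) : Prop := forall x, ~ occurs_var x t.

(* T[s/M]: replace every occurrence of the name s by M *)
Fixpoint rname (s : nat) (M t : term) : term :=
  match t with
  | Var x => Var x
  | Nam n => if Nat.eqb n s then M else Nam n
  | Cst c => Cst c
  | Enc a b c => Enc (rname s M a) (rname s M b) (rname s M c)
  | Dec a b => Dec (rname s M a) (rname s M b)
  | Enca a b c => Enca (rname s M a) (rname s M b) (rname s M c)
  | Deca a b => Deca (rname s M a) (rname s M b)
  | Pub a => Pub (rname s M a)
  | Priv a => Priv (rname s M a)
  | Pair a b => Pair (rname s M a) (rname s M b)
  | Pi1 a => Pi1 (rname s M a)
  | Pi2 a => Pi2 (rname s M a)
  | Sign a b => Sign (rname s M a) (rname s M b)
  | Check a b c => Check (rname s M a) (rname s M b) (rname s M c)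
  | Retr a => Retr (rname s M a)
  end.

Definition subst := list (nat * term).
Definition dom (sg : subst) : list nat := map fst sg.
Definition ran (sg : subst) : list term := map snd sg.

Fixpoint lookup (sg : subst) (x : nat) : option term :=
  match sg with
  | [] => None
  | (y, T) :: sg' => if Nat.eqb x y then Some T else lookup sg' x
  end.

(* U sigma  (one application of sigma; variables outside dom unchanged) *)
Fixpoint app_sub (sg : subst) (t : term) : term :=
  match t with
  | Var x => match lookup sg x with Some T => T | None => Var x end
  | Nam n => Nam n
  | Cst c => Cst c
  | Enc a b c => Enc (app_sub sg a) (app_sub sg b) (app_sub sg c)
  | Dec a b => Dec (app_sub sg a) (app_sub sg b)
  | Enca a b c => Enca (app_sub sg a) (app_sub sg b) (app_sub sg c)
  | Deca a b => Deca (app_sub sg a) (app_sub sg b)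
  | Pub a => Pub (app_sub sg a)
  | Priv a => Priv (app_sub sg a)
  | Pair a b => Pair (app_sub sg a) (app_sub sg b)
  | Pi1 a => Pi1 (app_sub sg a)
  | Pi2 a => Pi2 (app_sub sg a)
  | Sign a b => Sign (app_sub sg a) (app_sub sg b)
  | Check a b c => Check (app_sub sg a) (app_sub sg b) (app_sub sg c)
  | Retr a => Retr (app_sub sg a)
  end.

(* acyclic: the "y occurs in x sigma" relation on dom(sigma) has no cycle,
   i.e. it is ranked by some function into nat *)
Definition acyclic (sg : subst) : Prop :=
  exists rk : nat -> nat,
    forall x y T, In (x, T) sg -> In y (dom sg) -> occurs_var y T -> rk y < rk x.

(* a frame  nu n~. sigma : n~ a finite set of names (list), sigma a
   substitution (functional: no variable bound twice) that is acyclic *)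
Definition is_frame (ns : list nat) (sg : subst) : Prop :=
  NoDup (dom sg) /\ acyclic sg.

Inductive eqE : term -> term -> Prop :=
| eqE_refl  : forall t, eqE t t
| eqE_sym   : forall t u, eqE t u -> eqE u t
| eqE_trans : forall t u v, eqE t u -> eqE u v -> eqE t v
| eqE_pi1   : forall z1 z2, eqE (Pi1 (Pair z1 z2)) z1
| eqE_pi2   : forall z1 z2, eqE (Pi2 (Pair z1 z2)) z2
| eqE_dec   : forall z1 z2 z3, eqE (Dec (Enc z1 z2 z3) z2) z1
| eqE_deca  : forall z1 z2 z3, eqE (Deca (Enca z1 (Pub z2) z3) (Priv z2)) z1
| eqE_check : forall z1 z2, eqE (Check z1 (Sign z1 (Priv z2)) (Pub z2)) ok
| eqE_retr  : forall z1 z2, eqE (Retr (Sign z1 z2)) z1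
| eqE_Enc   : forall a a' b b' c c', eqE a a' -> eqE b b' -> eqE c c' -> eqE (Enc a b c) (Enc a' b' c')
| eqE_Dec   : forall a a' b b', eqE a a' -> eqE b b' -> eqE (Dec a b) (Dec a' b')
| eqE_Enca  : forall a a' b b' c c', eqE a a' -> eqE b b' -> eqE c c' -> eqE (Enca a b c) (Enca a' b' c')
| eqE_Deca  : forall a a' b b', eqE a a' -> eqE b b' -> eqE (Deca a b) (Deca a' b')
| eqE_Pub   : forall a a', eqE a a' -> eqE (Pub a) (Pub a')
| eqE_Priv  : forall a a', eqE a a' -> eqE (Priv a) (Priv a')
| eqE_Pair  : forall a a' b b', eqE a a' -> eqE b b' -> eqE (Pair a b) (Pair a' b')
| eqE_Pi1   : forall a a', eqE a a' -> eqE (Pi1 a) (Pi1 a')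
| eqE_Pi2   : forall a a', eqE a a' -> eqE (Pi2 a) (Pi2 a')
| eqE_Sign  : forall a a' b b', eqE a a' -> eqE b b' -> eqE (Sign a b) (Sign a' b')
| eqE_Check : forall a a' b b' c c', eqE a a' -> eqE b b' -> eqE c c' -> eqE (Check a b c) (Check a' b' c')
| eqE_Retr  : forall a a', eqE a a' -> eqE (Retr a) (Retr a').

Inductive deduc (ns : list nat) (sg : subst) : term -> Prop :=
| d_var   : forall x T, lookup sg x = Some T -> deduc ns sg T
| d_name  : forall n, ~ In n ns -> deduc ns sg (Nam n)
| d_cst   : forall c, deduc ns sg (Cst c)
| d_Enc   : forall a b c, deduc ns sg a -> deduc ns sg b -> deduc ns sg c -> deduc ns sg (Enc a b c)
| d_Dec   : forall a b, deduc ns sg a -> deduc ns sg b -> deduc ns sg (Dec a b)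
| d_Enca  : forall a b c, deduc ns sg a -> deduc ns sg b -> deduc ns sg c -> deduc ns sg (Enca a b c)
| d_Deca  : forall a b, deduc ns sg a -> deduc ns sg b -> deduc ns sg (Deca a b)
| d_Pub   : forall a, deduc ns sg a -> deduc ns sg (Pub a)
| d_Pair  : forall a b, deduc ns sg a -> deduc ns sg b -> deduc ns sg (Pair a b)
| d_Pi1   : forall a, deduc ns sg a -> deduc ns sg (Pi1 a)
| d_Pi2   : forall a, deduc ns sg a -> deduc ns sg (Pi2 a)
| d_Sign  : forall a b, deduc ns sg a -> deduc ns sg b -> deduc ns sg (Sign a b)
| d_Check : forall a b c, deduc ns sg a -> deduc ns sg b -> deduc ns sg c -> deduc ns sg (Check a b c)
| d_Retr  : forall a, deduc ns sg a -> deduc ns sg (Retr a)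
| d_eqE   : forall t u, deduc ns sg t -> eqE t u -> deduc ns sg u.

Definition public (ns : list nat) (t : term) : Prop :=
  (forall n, In n ns -> ~ occurs_name n t) /\
  (forall u, subterm u t -> ~ is_priv u).

Definition third_arg (t : term) : option term :=
  match t with Enc _ _ r | Enca _ _ r => Some r | _ => None end.

Definition enc_occ (U : term) (q : list nat) : Prop :=
  exists e, subterm_at U q = Some e /\ is_encryption e.

Definition agent_enc (ms : list nat) (U : term) (q : list nat) : Prop :=
  exists n, subterm_at U (q ++ [3]) = Some (Nam n) /\ In n ms.

Definition prob_enc (S : list term) (U : term) (q : list nat) : Prop :=
  forall V p R, In V S -> subterm_at U (q ++ [3]) = Some R ->
    subterm_at V p = Some R ->
    exists q', p = q' ++ [3] /\ subterm_at V q' = subterm_at U q.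

Definition remove_name (s : nat) (ns : list nat) : list nat :=
  filter (fun n => negb (Nat.eqb n s)) ns.

Definition frame_subterm (sg : subst) (u : term) : Prop :=
  exists T, In T (ran sg) /\ subterm u T.

Definition well_formed (ns : list nat) (sg : subst) (s : nat) : Prop :=
  (forall T q, In T (ran sg) -> enc_occ T q ->
     agent_enc (remove_name s ns) T q /\ prob_enc (ran sg) T q) /\
  (forall a b c, frame_subterm sg (Enc a b c) -> ~ occurs_name s b /\ ~ occurs_name s c) /\
  (forall a b c, frame_subterm sg (Enca a b c) -> ~ occurs_name s b /\ ~ occurs_name s c) /\
  (forall a b, frame_subterm sg (Sign a b) -> ~ occurs_name s b) /\
  (forall w, frame_subterm sg (Pub w) -> ~ occurs_name s w) /\
  (forall w, frame_subterm sg (Priv w) -> ~ occurs_name s w) /\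
  (forall u, frame_subterm sg u -> ~ is_destructor u).

(* Main.v *)
Require Import Defs.
From Stdlib Require Import List Arith Lia.
Import ListNotations.

Lemma subterm_at_app t p p' :
  subterm_at t (p ++ p') = match subterm_at t p with Some u => subterm_at u p' | None => None end.
Proof.
  revert t; induction p as [|i p IH]; intros t; simpl; auto.
  destruct i; auto. destruct (nth_error (args t) i); auto.
Qed.

Lemma subterm_refl t : subterm t t.
Proof. exists []; reflexivity. Qed.

Lemma subterm_trans u a t : subterm u a -> subterm a t -> subterm u t.
Proof.
  intros [p1 H1] [p2 H2]. exists (p2 ++ p1). rewrite subterm_at_app, H2; auto.
Qed.

Lemma subterm_arg a t : In a (args t) -> subterm a t.
Proof.
  intros Hin. destruct (In_nth_error _ _ Hin) as [i Hi].
  exists (S i :: []). simpl. rewrite Hi. reflexivity.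
Qed.

Definition NoNs (ns : list nat) W := forall n, In n ns -> ~ occurs_name n W.
Definition VarsDom (sg : subst) W := forall x, occurs_var x W -> In x (dom sg).
Definition T1 ns sg A := exists W, A = app_sub sg W /\ NoNs ns W /\ VarsDom sg W /\ (forall x, W <> Var x).
Definition FF ns sg s A := frame_subterm sg A /\ (deduc ns sg A \/ ~ occurs_name s A).
Definition Inv ns sg s A := T1 ns sg A \/ FF ns sg s A.

Lemma NoNs_arg ns W a : NoNs ns W -> In a (args W) -> NoNs ns a.
Proof. intros H Ha n Hn Ho. apply (H n Hn). eapply subterm_trans; eauto using subterm_arg. Qed.

Lemma VarsDom_arg sg W a : VarsDom sg W -> In a (args W) -> VarsDom sg a.
Proof. intros H Ha x Ho. apply H. eapply subterm_trans; eauto using subterm_arg. Qed.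

Lemma NoS_arg s A a : ~ occurs_name s A -> In a (args A) -> ~ occurs_name s a.
Proof. intros H Ha Ho. apply H. eapply subterm_trans; eauto using subterm_arg. Qed.

Lemma frame_arg sg A a : frame_subterm sg A -> In a (args A) -> frame_subterm sg a.
Proof. intros [T [HT HA]] Ha. exists T; split; auto. eapply subterm_trans; eauto using subterm_arg. Qed.

Lemma lookup_ran sg x T : lookup sg x = Some T -> In T (ran sg).
Proof.
  induction sg as [|[y U] sg IH]; simpl; [discriminate|].
  destruct (x =? y); [intros H; injection H; auto| auto].
Qed.

Lemma dom_lookup sg x : In x (dom sg) -> exists T, lookup sg x = Some T.
Proof.
  induction sg as [|[y U] sg IH]; simpl; [tauto|].
  intros [H|H]; destruct (Nat.eqb_spec x y); eauto; subst; congruence.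
Qed.

Lemma mkInv ns sg s W : NoNs ns W -> VarsDom sg W -> Inv ns sg s (app_sub sg W).
Proof.
  intros H1 H2. destruct W; try (left; eexists; repeat split; eauto; discriminate).
  right. destruct (dom_lookup sg n) as [T HT]. { apply H2. apply subterm_refl. }
  simpl. rewrite HT. split.
  - exists T; split; [eapply lookup_ran; eauto | apply subterm_refl].
  - left. eapply d_var; eauto.
Qed.

Lemma args_app_sub sg W : (forall x, W <> Var x) -> args (app_sub sg W) = map (app_sub sg) (args W).
Proof. intros H; destruct W; simpl; auto. exfalso; eapply H; eauto. Qed.

Lemma inv_args ns sg s A : well_formed ns sg s -> Inv ns sg s A -> ~ is_encryption A ->
  forall a, In a (args A) -> Inv ns sg s a.
Proof.
  intros WF [[W [HA [H1 [H2 H3]]]] | [Hf Hd]] Hne a Ha.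
  - subst A. rewrite args_app_sub in Ha by auto.
    apply in_map_iff in Ha. destruct Ha as [W' [<- HW']].
    apply mkInv; eauto using NoNs_arg, VarsDom_arg.
  - right. split; [eauto using frame_arg|].
    destruct Hd as [Hd|Hd]; [|right; eauto using NoS_arg].
    destruct WF as (W1 & W2 & W3 & W4 & W5 & W6 & W7).
    destruct A; simpl in Ha; try tauto; try (exfalso; apply Hne; exact I);
      try (exfalso; apply (W7 _ Hf); simpl; auto; fail).
    + destruct Ha as [<-|[]]; right; eapply W5; eauto.
    + destruct Ha as [<-|[]]; right; eapply W6; eauto.
    + destruct Ha as [<-|[<-|[]]]; left.
      * eapply d_eqE; [apply d_Pi1; eauto| apply eqE_pi1].
      * eapply d_eqE; [apply d_Pi2; eauto| apply eqE_pi2].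
    + destruct Ha as [<-|[<-|[]]].
      * left. eapply d_eqE; [apply d_Retr; eauto| apply eqE_retr].
      * right. eapply W4; eauto.
Qed.

Lemma enc_sub3 E : is_encryption E -> subterm_at E [3] = third_arg E.
Proof. destruct E; simpl; try contradiction; reflexivity. Qed.

Lemma enc_third ns sg s E : well_formed ns sg s -> frame_subterm sg E -> is_encryption E ->
  exists r, third_arg E = Some (Nam r) /\ In r ns /\ r <> s.
Proof.
  intros WF [T [HT [q Hq]]] He.
  destruct WF as [W1 _].
  destruct (W1 T q HT) as [[n [Hn Hin]] _]. { exists E; auto. }
  rewrite subterm_at_app, Hq, enc_sub3 in Hn by auto.
  unfold remove_name in Hin. apply filter_In in Hin. destruct Hin as [Hin Hb].
  exists n; repeat split; auto. intro; subst. rewrite Nat.eqb_refl in Hb; discriminate.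
Qed.

Lemma enc_prob ns sg s E T' p r : well_formed ns sg s -> frame_subterm sg E -> is_encryption E ->
  third_arg E = Some (Nam r) -> In T' (ran sg) -> subterm_at T' p = Some (Nam r) ->
  exists q', p = q' ++ [3] /\ subterm_at T' q' = Some E.
Proof.
  intros WF [T [HT [q Hq]]] He H3 HT' Hp.
  destruct WF as [W1 _].
  destruct (W1 T q HT) as [_ Hpe]. { exists E; auto. }
  destruct (Hpe T' p (Nam r) HT') as [q' [Hq1 Hq2]]; auto.
  - rewrite subterm_at_app, Hq, enc_sub3; auto.
  - exists q'; split; auto. congruence.
Qed.

Lemma enc_uniq ns sg s E E' r : well_formed ns sg s -> frame_subterm sg E -> frame_subterm sg E' ->
  is_encryption E -> is_encryption E' -> third_arg E = Some (Nam r) -> third_arg E' = Some (Nam r) -> E = E'.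
Proof.
  intros WF HE [T' [HT' [q' Hq']]] He He' H3 H3'.
  destruct (enc_prob ns sg s E T' (q' ++ [3]) r WF HE He H3 HT') as [q'' [Hq1 Hq2]].
  - rewrite subterm_at_app, Hq', enc_sub3; auto.
  - apply app_inj_tail in Hq1. destruct Hq1; subst. congruence.
Qed.

Lemma enc_novar ns sg s E r : well_formed ns sg s -> frame_subterm sg E -> is_encryption E ->
  third_arg E = Some (Nam r) -> In (Nam r) (ran sg) -> False.
Proof.
  intros WF HE He H3 Hr.
  destruct (enc_prob ns sg s E (Nam r) [] r WF HE He H3 Hr eq_refl) as [q' [Hq _]].
  destruct q'; discriminate.
Qed.

Lemma third_T1 ns sg s E r W3 : well_formed ns sg s -> frame_subterm sg E -> is_encryption E ->
  third_arg E = Some (Nam r) -> In r ns -> NoNs ns W3 -> VarsDom sg W3 -> app_sub sg W3 = Nam r -> False.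
Proof.
  intros WF HE He H3 Hr HN HV Heq.
  destruct W3; simpl in Heq; try discriminate.
  - destruct (lookup sg n) eqn:Hl; [subst|discriminate].
    eapply enc_novar; eauto. eapply lookup_ran; eauto.
  - injection Heq as ->. apply (HN r Hr). apply subterm_refl.
Qed.

Lemma rname_nam ns s M t r : public ns M -> In r ns -> rname s M t = Nam r -> t = Nam r.
Proof.
  intros [HM _] Hr H. destruct t; simpl in H; try discriminate.
  destruct (Nat.eqb n s); auto.
  subst. exfalso. apply (HM r Hr). apply subterm_refl.
Qed.

Lemma not_inv_s ns sg s : ~ deduc ns sg (Nam s) -> In s ns -> Inv ns sg s (Nam s) -> False.
Proof.
  intros Hd Hs [[W [HA [H1 [H2 H3]]]] | [_ [H|H]]]; auto.
  - destruct W; simpl in HA; try discriminate.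
    + eapply H3; eauto.
    + injection HA as Hn; subst n. apply (H1 s Hs). apply subterm_refl.
  - apply H, subterm_refl.
Qed.

Lemma enc_inv ns sg s E : is_encryption E -> Inv ns sg s E ->
  ((forall x, In x (args E) -> Inv ns sg s x) /\
    exists W3, third_arg E = Some (app_sub sg W3) /\ NoNs ns W3 /\ VarsDom sg W3)
  \/ FF ns sg s E.
Proof.
  intros He [[W [HA [H1 [H2 H3]]]] | HF]; [left|right; auto].
  split.
  - intros a Ha. subst E. rewrite args_app_sub in Ha by auto.
    apply in_map_iff in Ha. destruct Ha as [W' [<- HW']].
    apply mkInv; eauto using NoNs_arg, VarsDom_arg.
  - subst E. destruct W; try (exfalso; eapply H3; reflexivity); simpl in He; try contradiction; eexists; (split; [reflexivity|]);
      (split; [eapply NoNs_arg | eapply VarsDom_arg]; eauto; simpl; auto).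
Qed.

Lemma enc_pair ns sg s M A B : well_formed ns sg s -> public ns M -> FF ns sg s A -> is_encryption A ->
  (FF ns sg s B \/ exists W3, third_arg B = Some (app_sub sg W3) /\ NoNs ns W3 /\ VarsDom sg W3) ->
  is_encryption B ->
  option_map (rname s M) (third_arg A) = option_map (rname s M) (third_arg B) -> A = B.
Proof.
  intros WF HM [HfA _] HeA HB HeB Heq.
  destruct (enc_third ns sg s A WF HfA HeA) as [r [H3 [Hr Hrs]]].
  rewrite H3 in Heq. simpl in Heq.
  destruct (third_arg B) as [c|] eqn:Hc; [|discriminate].
  injection Heq as Heq. assert (Hrs2 : (r =? s) = false) by (apply Nat.eqb_neq; auto). rewrite Hrs2 in Heq. symmetry in Heq. apply (rname_nam ns) in Heq; auto. subst c.
  destruct HB as [[HfB _] | [W3 [HW3 [HN HV]]]].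
  - eapply enc_uniq; eauto.
  - exfalso. injection HW3 as HW3. symmetry in HW3.
    eapply (third_T1 ns sg s A r W3); eauto.
Qed.

Lemma main_inj ns sg s M : well_formed ns sg s -> public ns M -> ~ deduc ns sg (Nam s) -> In s ns ->
  forall A B, Inv ns sg s A -> Inv ns sg s B -> rname s M A = rname s M B -> A = B.
Proof.
  intros WF HM Hd Hs A.
  induction A; intros B IA IB H;
   (destruct B; simpl in H;
    repeat match goal with
    | H : context[Nat.eqb ?n s] |- _ =>
        destruct (Nat.eqb_spec n s); [subst; exfalso; eauto using not_inv_s |]
    end; try discriminate; try (injection H; intros; subst; reflexivity)).
  all: try (injection H; intros; f_equal;
    match goal with
    | IH : forall B, Inv _ _ _ ?a -> _ -> _ -> ?a = B |- ?a = ?b =>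
        apply IH; [apply (inv_args ns sg s _ WF IA); simpl; tauto
                  |apply (inv_args ns sg s _ WF IB); simpl; tauto
                  | assumption]
    end; fail).
  all: injection H; intros.
  all: match goal with IA : Inv _ _ _ ?EA, IB : Inv _ _ _ ?EB |- _ =>
       destruct (enc_inv ns sg s EA I IA) as [[HA HWA]|FA];
       destruct (enc_inv ns sg s EB I IB) as [[HB HWB]|FB] end.
  all: try (f_equal;
    match goal with
    | IH : forall B, Inv _ _ _ ?a -> _ -> _ -> ?a = B |- ?a = ?b =>
        apply IH; [apply HA; simpl; tauto | apply HB; simpl; tauto | assumption]
    end; fail).
  all: match goal with
       | FA : FF _ _ _ ?EA, FB : FF _ _ _ ?EB |- _ =>
           apply (enc_pair ns sg s M EA EB WF HM FA I (or_introl FB) I); simpl; congruence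
       | FA : FF _ _ _ ?EA, HWB : exists _, third_arg ?EB = _ /\ _ |- _ =>
           apply (enc_pair ns sg s M EA EB WF HM FA I (or_intror HWB) I); simpl; congruence
       | FB : FF _ _ _ ?EB, HWA : exists _, third_arg ?EA = _ /\ _ |- _ =>
           symmetry; apply (enc_pair ns sg s M EB EA WF HM FB I (or_intror HWA) I); simpl; congruence
       end.
Qed.

Theorem lemma2p7 (ns : list nat) (sg : subst) (s : nat) (U V M : term) :
  is_frame ns sg ->
  In s ns ->
  well_formed ns sg s ->
  ~ deduc ns sg (Nam s) ->
  public ns U -> public ns V -> public ns M ->
  (forall x, occurs_var x U -> In x (dom sg)) ->
  (forall x, occurs_var x V -> In x (dom sg)) ->
  ground M ->
  rname s M (app_sub sg U) = rname s M (app_sub sg V) ->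
  app_sub sg U = app_sub sg V.
Proof.
  intros _ Hs WF Hd [HU _] [HV _] HM HdU HdV _ H.
  eapply main_inj; eauto; apply mkInv; auto.
Qed.
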